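(* Let $k>1$ and let $\mathcal P$ be any $k$-pattern in $\mathbb R$ under direct similarity. If $n$ is a positive integer and $r$ is the remainder when $n$ is divided by $k-1$, then $S_{\mathcal P}(n)\le (n-r)(n+r-k+1)/(2k-2)$.
   Context: A direct similarity of $\mathbb R$ is a map $x\mapsto ax+b$ with $a>0$, $b\in\mathbb R$. A $k$-pattern in $\mathbb R$ under direct similarity is the set $\mathcal P$ of all images of a fixed $k$-element set $P_0\subseteq\mathbb R$ under direct similarities. For finite $V\subseteq\mathbb R$, $S_{\mathcal P}(V)=|\{P\subseteq V:P\in\mathcal P\}|$ and $S_{\mathcal P}(n)=\max\{S_{\mathcal P}(V):V\subseteq\mathbb R,\ |V|=n\}$. *)

(* Defs.v *)
From Stdlib Require Import Reals ClassicalEpsilon.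
From mathcomp Require Import all_boot.
Delimit Scope R_scope with Rs.
Set Implicit Arguments. Unset Strict Implicit. Unset Printing Implicit Defensive.

Definition pb (P : Prop) : bool :=
  if excluded_middle_informative P then true else false.

Definition in_pattern (k : nat) (P0 : 'I_k -> R) (S : R -> Prop) : Prop :=
  exists a b : R, (0 < a)%Rs /\
    forall x : R, S x <-> exists j : 'I_k, x = (a * P0 j + b)%Rs.

(* S_P(V): number of subsets of V = {V i | i < n} (V injective) lying in the
   pattern generated by P0.  Subsets of V correspond bijectively to subsets
   of the index set 'I_n since V is injective. *)
Definition S_count (k : nat) (P0 : 'I_k -> R) (n : nat) (V : 'I_n -> R) : nat :=
  #|[set A : {set 'I_n} |
      pb (in_pattern P0 (fun x => exists i : 'I_n, i \in A /\ V i = x))]|.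

(* Main.v *)
Require Import Defs.
From Stdlib Require Import Reals Lra Psatz Classical ClassicalEpsilon.
From mathcomp Require Import all_boot zify.

Section Blocks.
Variables K q r : nat.
Let M := r * q.+1.
Definition stb (b : nat) := if b < M then b %/ q.+1 * q.+1 else M + (b - M) %/ q * q.
Definition beb (b : nat) := if b < M then b %/ q.+1 else r + (b - M) %/ q.

Lemma beb_mono a b : a <= b -> beb a <= beb b.
Proof.
move=> ab; rewrite /beb.
case: ifP => aM; case: ifP => bM.
- exact: leq_div2r.
- apply: leq_trans (leq_addr _ _); rewrite ltnW // ltn_divLR //.
- exfalso; move: aM bM; lia.
- by rewrite leq_add2l leq_div2r // leq_sub2r.
Qed.

Lemma beb_lt b : r < K -> b < q * K + r -> beb b < K.
Proof.
move=> rK bn; rewrite /beb; case: ifP => bM.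
  by rewrite (leq_trans _ (ltnW rK)) // ltn_divLR.
have hq : 0 < q.
  case: (posnP q) => [q0|//]; move: bn bM; rewrite /M q0; lia.
have : (b - M) %/ q < K - r.
  rewrite ltn_divLR //.
  have e : M = r * q + r by rewrite /M mulnS addnC.
  move: bn bM; rewrite e => bn bM.
  have : b - (r * q + r) < (K - r) * q.
    rewrite mulnBl.
    have : r * q <= K * q by rewrite leq_mul2r ltnW ?orbT.
    move: bn bM; rewrite mulnC; lia.
  by [].
lia.
Qed.

Lemma stb_le b : stb b <= b.
Proof.
rewrite /stb; case: ifP => bM; first exact: leq_divM.
have := leq_divM (b - M) q; move: bM; lia.
Qed.

Lemma lt_stb a b : a < stb b -> beb a < beb b.
Proof.
rewrite /stb /beb => h; case: ifP h => bM h.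
  have aM : a < M by apply: leq_trans h (leq_trans (leq_divM _ _) (ltnW bM)).
  case: ifP => aM'; last by rewrite aM in aM'.
  by rewrite ltn_divLR.
case: ifP => aM.
  apply: leq_trans (leq_addr _ _); rewrite ltn_divLR //.
have hq : 0 < q.
  case: (posnP q) => [q0|//]; move: h aM; rewrite /M q0; lia.
rewrite ltn_add2l ltn_divLR //.
move: h aM; lia.
Qed.
End Blocks.
Lemma card_pairs n (s : nat -> nat) : (forall b, s b <= b) ->
  #|[set p : 'I_n * 'I_n | (s p.2 <= p.1) && (p.1 < p.2)]| = \sum_(b < n) (b - s b).
Proof.
move=> hs.
rewrite -sum1_card big_mkcond /=.
rewrite (eq_bigr (fun p : 'I_n * 'I_n => nat_of_bool ((s p.2 <= p.1) && (p.1 < p.2)))); last first.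
  by move=> p _; rewrite inE; case: ifP.
rewrite -(pair_big xpredT xpredT (fun (a b : 'I_n) => nat_of_bool ((s b <= a) && (a < b)))) /=.
rewrite exchange_big /=; apply: eq_bigr => b _.
rewrite -(big_mkord (fun _ => true) (fun a => nat_of_bool ((s b <= a) && (a < b)))).
have bn : b <= n by apply: ltnW.
rewrite (@big_cat_nat _ _ _ (s b)) /=; [|by []|by apply: leq_trans (hs b) bn].
rewrite (@big_cat_nat _ _ _ b (s b)) //=.
rewrite big1_seq; last first.
  by move=> i /andP[_]; rewrite mem_index_iota => /andP[_ h]; rewrite leqNgt h.
rewrite [X in _ + (_ + X)]big1_seq; last first.
  by move=> i /andP[_]; rewrite mem_index_iota => /andP[h _]; rewrite ltnNge h andbF.
rewrite add0n addn0.
rewrite (eq_big_seq (fun _ => 1)); last first.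
  by move=> i; rewrite mem_index_iota => /andP[h1 h2]; rewrite h1 h2.
by rewrite sum_nat_const_nat muln1.
Qed.

Lemma sum_mod m d : \sum_(0 <= b < m * d) (b %% d) = m * 'C(d, 2).
Proof.
elim: m => [|m IH]; first by rewrite !mul0n big_geq.
rewrite mulSn (@big_cat_nat _ _ _ (m * d)) /=; [|by []|by rewrite leq_addl].
rewrite IH mulSn addnC; congr (_ + _).
rewrite -{1}(add0n (m * d)) big_addn addnK -bin2_sum.
apply: eq_big_seq => i; rewrite mem_index_iota => /andP[_ h].
by rewrite addnC modnMDl modn_small.
Qed.

Lemma sum_blocks K q r : r <= K ->
  \sum_(b < q * K + r) (b - stb q r b) = r * 'C(q.+1, 2) + (K - r) * 'C(q, 2).
Proof.
move=> rK.
have hM : r * q.+1 <= q * K + r.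
  rewrite mulnS addnC leq_add2r mulnC leq_mul2l rK orbT //.
rewrite -(big_mkord (fun _ => true) (fun b => b - stb q r b)) (@big_cat_nat _ _ _ (r * q.+1)) //=.
congr (_ + _).
  rewrite -sum_mod; apply: eq_big_seq => b; rewrite mem_index_iota => /andP[_ h].
  by rewrite /stb h {1}(divn_eq b q.+1) addKn.
rewrite -{1}(add0n (r * q.+1)) big_addn.
have -> : q * K + r - r * q.+1 = (K - r) * q.
  rewrite mulnBl mulnS. lia.
rewrite -sum_mod; apply: eq_big_seq => i; rewrite mem_index_iota => /andP[_ h].
rewrite /stb ltnNge leq_addl /= addnK.
by rewrite [i + _]addnC subnDl {1}(divn_eq i q) addKn.
Qed.
Lemma bin2_id d : 'C(d, 2) * 2 + d = d * d.
Proof.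
elim: d => [//|d IH]; rewrite binS bin1; lia.
Qed.

Lemma INR_sub a b : b <= a -> INR (a - b) = (INR a - INR b)%Rs.
Proof. by move=> h; rewrite -minusE minus_INR //; apply/leP. Qed.
Lemma INR_add a b : INR (a + b) = (INR a + INR b)%Rs.
Proof. by rewrite -plusE plus_INR. Qed.
Lemma INR_mul a b : INR (a * b) = (INR a * INR b)%Rs.
Proof. by rewrite -multE mult_INR. Qed.

Lemma final_real k n : 1 < k ->
  let K := k - 1 in let q := n %/ K in let r := n %% K in
  INR (r * 'C(q.+1, 2) + (K - r) * 'C(q, 2)) =
  ((INR n - INR r) * (INR n + INR r - INR k + 1) / (2 * INR k - 2))%Rs.
Proof.
move=> hk K q r.
have hK : 0 < K by rewrite /K subn_gt0.
have rK : r <= K by rewrite ltnW // ltn_mod.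
have en : n = q * K + r by rewrite /q /r -divn_eq.
have ek : k = K + 1 by rewrite /K subnK // ltnW.
have h2 : INR 2 = 2%Rs by simpl; lra.
have e1 := bin2_id q.+1. have e2 := bin2_id q.
have R1 : (INR ('C(q.+1, 2)) * 2 + INR q + 1 = (INR q + 1) * (INR q + 1))%Rs.
  have := congr1 INR e1; rewrite INR_add INR_mul INR_mul h2 !S_INR; lra.
have R2 : (INR ('C(q, 2)) * 2 + INR q = INR q * INR q)%Rs.
  have := congr1 INR e2; rewrite INR_add INR_mul INR_mul h2; lra.
have KR : (0 < INR K)%Rs by apply: lt_0_INR; apply/ltP.
rewrite INR_add !INR_mul INR_sub //.
have -> : INR 'C(q.+1, 2) = (INR q * (INR q + 1) / 2)%Rs by lra.
have -> : INR 'C(q, 2) = (INR q * (INR q - 1) / 2)%Rs by lra.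
rewrite en ek INR_add INR_add INR_mul /=.
field; lra.
Qed.
Lemma pbP (P : Prop) : reflect P (pb P).
Proof. by rewrite /pb; case: excluded_middle_informative => h; constructor. Qed.

Section Rank.
Variables (m : nat) (g : 'I_m -> R).
Definition rk (i : 'I_m) : nat := #|[set j : 'I_m | pb (g j < g i)%Rs]|.

Lemma rk_le i j : (g i <= g j)%Rs -> rk i <= rk j.
Proof.
move=> h; apply: subset_leq_card; apply/subsetP => x; rewrite !inE.
move/pbP => hx; apply/pbP; lra.
Qed.

Lemma rk_lt i j : (g i < g j)%Rs -> rk i < rk j.
Proof.
move=> h; apply: proper_card; apply/properP; split.
  apply/subsetP => x; rewrite !inE; move/pbP => hx; apply/pbP; lra.
exists i; rewrite !inE; first by apply/pbP.
by apply/pbP; lra.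
Qed.

Lemma rk_ltn i : rk i < m.
Proof.
rewrite -[X in _ < X](card_ord m); apply: proper_card; apply/properP; split.
  by apply/subsetP.
by exists i => //; rewrite inE; apply/pbP; lra.
Qed.

Definition rkO i : 'I_m := Ordinal (rk_ltn i).

Hypothesis ginj : injective g.

Lemma rk_inj : injective rk.
Proof.
move=> i j e; apply: ginj.
case: (Rtotal_order (g i) (g j)) => [h|[//|h]].
  by have := rk_lt _ _ h; rewrite e ltnn.
by have := rk_lt _ _ h; rewrite e ltnn.
Qed.

Lemma rkO_inj : injective rkO.
Proof. by move=> i j /(congr1 val) /= /rk_inj. Qed.

Lemma rk_surj l : l < m -> exists j, rk j = l.
Proof.
move=> hl; exists (invF rkO_inj (Ordinal hl)).
by have := f_invF rkO_inj (Ordinal hl) => /(congr1 val).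
Qed.

Lemma rk_lt_inv i j : rk i < rk j -> (g i < g j)%Rs.
Proof.
move=> h; case: (Rlt_le_dec (g i) (g j)) => // h'.
by have := rk_le _ _ h'; rewrite leqNgt h.
Qed.
End Rank.
Arguments rk {m} g i.
Arguments rkO {m} g i.
Arguments rk_le {m g i j}.
Arguments rk_lt {m g i j}.
Arguments rk_ltn {m} g i.
Arguments rk_inj {m g} ginj [x1 x2].
Arguments rk_surj {m g} ginj [l].
Arguments rk_lt_inv {m g i j}.

Lemma first_fail (P : nat -> Prop) m : P 0 -> ~ P m -> exists l, l < m /\ P l /\ ~ P l.+1.
Proof.
elim: m => [h0 h|m IH h0 h]; first by [].
case: (classic (P m)) => hm; first by exists m.
have [l [lm [pl npl]]] := IH h0 hm.
by exists l; split => //; apply: ltnW.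
Qed.

Theorem mainTheorem5 (k : nat) (hk : (1 < k)%N) (P0 : 'I_k -> R)
  (hP0 : injective P0) (n : nat) (hn : (0 < n)%N) :
  let r := (n %% (k - 1))%N in
  forall V : 'I_n -> R, injective V ->
  (INR (S_count P0 V) <=
     (INR n - INR r) * (INR n + INR r - INR k + 1) / (2 * INR k - 2))%Rs.
Proof.
move=> r V hV.
have fr := final_real k n hk; rewrite /= -/r in fr.
set K := k - 1.
set q := n %/ K in fr.
have hK : 0 < K by rewrite /K subn_gt0.
have rK : r < K by rewrite /r ltn_mod.
have en : n = q * K + r by rewrite /q /r -divn_eq.
pose T := [set p : 'I_n * 'I_n | (stb q r p.2 <= p.1) && (p.1 < p.2)].
pose S := [set A : {set 'I_n} | pb (in_pattern P0 (fun x => exists i, i \in A /\ V i = x))].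
pose good (A : {set 'I_n}) (p : 'I_n * 'I_n) : Prop :=
  exists a b : R, (0 < a)%Rs /\
   (forall x, (exists i, i \in A /\ V i = x) <-> exists j, x = (a * P0 j + b)%Rs) /\
   exists j1 j2 : 'I_k, exists i1 i2 : 'I_n,
     rk P0 j1 = beb q r p.2 /\ rk P0 j2 = (beb q r p.2).+1 /\
     rk V i1 = p.1 /\ rk V i2 = p.2 /\
     V i1 = (a * P0 j1 + b)%Rs /\ V i2 = (a * P0 j2 + b)%Rs.
have exist : forall A, A \in S -> exists p, p \in T /\ good A p.
  move=> A; rewrite inE => /pbP [a [b [ha hA]]].
  have img : forall j, exists i, V i = (a * P0 j + b)%Rs.
    move=> j; have [i [_ hi]] : exists i, i \in A /\ V i = (a * P0 j + b)%Rs.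
      by apply/hA; exists j.
    by exists i.
  pose Pl (l : nat) : Prop := exists j i, rk P0 j = l /\ V i = (a * P0 j + b)%Rs /\
       l <= beb q r (rk V i).
  have P0l : Pl 0.
    have [j hj] := rk_surj hP0 (ltnW hk).
    have [i hi] := img j; by exists j, i.
  have nPK : ~ Pl K.
    move=> [j [i [_ [_ h]]]].
    have := beb_lt K q r (rk V i) rK; rewrite -en => /(_ (rk_ltn V i)).
    by rewrite ltnNge h.
  have [l [lK [[j1 [i1 [hj1 [hv1 hl1]]]] npl]]] := first_fail Pl K P0l nPK.
  have lk : l.+1 < k by move: lK; rewrite /K; lia.
  have [j2 hj2] := rk_surj hP0 lk.
  have [i2 hv2] := img j2.
  have hb2 : beb q r (rk V i2) < l.+1.
    rewrite ltnNge; apply/negP => h; apply: npl; by exists j2, i2.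
  have pj : (P0 j1 < P0 j2)%Rs by apply: rk_lt_inv; rewrite hj1 hj2.
  have vi : (V i1 < V i2)%Rs by rewrite hv1 hv2; nra.
  have ri := rk_lt vi.
  have mo := beb_mono q r _ _ (ltnW ri).
  have eb1 : beb q r (rk V i1) = l by lia.
  have eb2 : beb q r (rk V i2) = l by lia.
  exists (rkO V i1, rkO V i2); split.
    rewrite inE /= ri andbT leqNgt; apply/negP => h.
    by have := lt_stb q r _ _ h; rewrite eb1 eb2 ltnn.
  exists a, b; split => //; split => //.
  by exists j1, j2, i1, i2; rewrite /= eb2.
have uniq : forall A A' p, good A p -> good A' p -> A = A'.
  move=> A A' p [a [b [ha [hA [j1 [j2 [i1 [i2 [e1 [e2 [e3 [e4 [v1 v2]]]]]]]]]]]]]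
    [a' [b' [ha' [hA' [j1' [j2' [i1' [i2' [e1' [e2' [e3' [e4' [v1' v2']]]]]]]]]]]]].
  have ej1 : j1' = j1 by apply: (rk_inj hP0); rewrite e1 e1'.
  have ej2 : j2' = j2 by apply: (rk_inj hP0); rewrite e2 e2'.
  have ei1 : i1' = i1 by apply: (rk_inj hV); rewrite e3 e3'.
  have ei2 : i2' = i2 by apply: (rk_inj hV); rewrite e4 e4'.
  subst j1' j2' i1' i2'.
  have dj : P0 j1 <> P0 j2.
    move=> /hP0 ej; move: e2; rewrite -ej e1; lia.
  have ea : a' = a.
    have h : ((a - a') * (P0 j1 - P0 j2) = 0)%Rs by rewrite v1 in v1'; rewrite v2 in v2'; lra.
    case: (Rmult_integral _ _ h) => h'; first lra.
    by exfalso; apply: dj; lra.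
  have eb : b' = b by subst a'; lra.
  subst a' b'.
  apply/setP => i; apply/idP/idP => hi.
    have [j hj] : exists j, V i = (a * P0 j + b)%Rs by apply/hA; exists i.
    have [i' [hi' e]] : exists i', i' \in A' /\ V i' = V i by apply/hA'; exists j.
    by rewrite -(hV _ _ e).
  have [j hj] : exists j, V i = (a * P0 j + b)%Rs by apply/hA'; exists i.
  have [i' [hi' e]] : exists i', i' \in A /\ V i' = V i by apply/hA; exists j.
  by rewrite -(hV _ _ e).
pose p0 := (Ordinal hn, Ordinal hn).
pose f A := odflt p0 [pick p in T | pb (good A p)].
have fP : forall A, A \in S -> f A \in T /\ good A (f A).
  move=> A AS; rewrite /f; case: pickP => [p /andP[pT /pbP pg] | none] //=.
  have [p [pT pg]] := exist A AS.
  by have := none p; rewrite pT /=; move/pbP: pg => ->.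
have le : #|S| <= #|T|.
  rewrite -(@card_in_imset _ _ f).
    apply: subset_leq_card; apply/subsetP => _ /imsetP[A AS ->].
    by case: (fP A AS).
  move=> A A' AS A'S e.
  have [_ g1] := fP A AS; have [_ g2] := fP A' A'S.
  by rewrite e in g1; apply: uniq g1 g2.
have cT : #|T| = r * 'C(q.+1, 2) + (K - r) * 'C(q, 2).
  rewrite card_pairs; last exact: stb_le.
  have := sum_blocks K q r (ltnW rK); by rewrite -en.
rewrite -fr -cT.
apply: le_INR; apply/leP; exact: le.
Qed.
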